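(* Let $P$ be an $n\times l$ matrix over $\mathbb{F}_2$ and let $\theta\in\mathbb{R}$. Then \[ \langle \mathbf{0}|\exp(i\theta \mathbf{H}_P)|\mathbf{0}\rangle=\alpha_{(P,\theta)}, \] and for every nonzero $\mathbf{x}\in\mathbb{F}_2^l$, \[ \langle \mathbf{x}|\exp(i\theta \mathbf{H}_P)|\mathbf{0}\rangle=\alpha_{(P\top\mathbf{x},\theta)}-\alpha_{(P,\theta)}. \]
   Context: For an $n\times l$ binary matrix $P$ with rows $P_1,\dots,P_n\in\mathbb{F}_2^l$, the Hamiltonian on $l$ qubits is $\mathbf{H}_P=\sum_{a=1}^n\prod_{b=1}^l X_b^{P_{ab}}$, where $X_b$ is the Pauli $X$ operator on qubit $b$; $|\mathbf{x}\rangle$ denotes the computational basis state labelled by $\mathbf{x}\in\mathbb{F}_2^l$. The code $\mathcal{C}(P)\subseteq\mathbb{F}_2^n$ is the span of the columns of $P$; its rank $r$ is the rank of $P$ (so $|\mathcal{C}(P)|=2^r$), and $n$ is its length. The weight enumerator is $W_{\mathcal{C}}(\zeta)=\sum_{\mathbf{c}\in\mathcal{C}}\zeta^{|\mathbf{c}|}$, with $|\mathbf{c}|$ the Hamming weight. Define $\alpha_{(P,\theta)}=2^{-r}e^{i\theta n}W_{\mathcal{C}(P)}(e^{-2i\theta})$. For nonzero $\mathbf{x}\in\mathbb{F}_2^l$, the projection $P\top\mathbf{x}$ is the $n\times l$ matrix obtained from $P$ by replacing each row $\mathbf{a}$ by whichever of $\mathbf{a}$, $\mathbf{a}+\mathbf{x}$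 is lexicographically first. *)

(* Defs.v *)
From HB Require Import structures.
From mathcomp Require Import all_boot all_order all_algebra.
From mathcomp Require Import all_classical all_reals all_analysis.
From mathcomp Require Import complex.
Set Implicit Arguments. Unset Strict Implicit. Unset Printing Implicit Defensive.
Import Order.TTheory GRing.Theory Num.Theory.
Import numFieldNormedType.Exports.
Local Open Scope ring_scope.
Local Open Scope complex_scope.
Local Open Scope classical_set_scope.

Definition Cx (R : realType) : numFieldType := (R[i] : numFieldType).

Definition expi (R : realType) (t : R) : Cx R := (cos t +i* sin t).

(* Computational basis of l qubits is labelled by F_2^l = 'rV['F_2]_l.
   Operators on the 2^l-dimensional Hilbert space are given by their
   matrix entries A x y = <x|A|y>. *)
Definition op (R : realType) (l : nat) := 'rV['F_2]_l -> 'rV['F_2]_l -> Cx R.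

Definition opmul (R : realType) (l : nat) (A B : op R l) : op R l :=
  fun x y => \sum_(z : 'rV['F_2]_l) A x z * B z y.

Definition opid (R : realType) (l : nat) : op R l := fun x y => (x == y)%:R.

Definition oppow (R : realType) (l : nat) (A : op R l) (k : nat) : op R l :=
  iter k (opmul A) (@opid R l).

Definition ebasis (l : nat) (b : 'I_l) : 'rV['F_2]_l := \row_j ((j == b)%:R).

Definition pauliX (R : realType) (l : nat) (b : 'I_l) : op R l :=
  fun x y => (x == y + ebasis b)%:R.

Definition pauliString (R : realType) (l : nat) (v : 'rV['F_2]_l) : op R l :=
  foldr (fun b M => opmul (oppow (pauliX R b) (v 0 b != 0)) M)
        (@opid R l) (enum 'I_l).

Definition hamiltonian (R : realType) (n l : nat) (P : 'M['F_2]_(n, l)) : op R l :=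
  fun x y => \sum_(a < n) pauliString R (row a P) x y.

Definition iThetaH (R : realType) (n l : nat) (P : 'M['F_2]_(n, l)) (theta : R)
  : op R l := fun x y => ('i * theta%:C) * hamiltonian R P x y.

Definition opexp_entry_is (R : realType) (l : nat) (A : op R l)
  (x y : 'rV['F_2]_l) (z : Cx R) : Prop :=
  series (fun k => oppow A k x y / (k`!)%:R) @ \oo --> z.

(* The code C(P): span of the columns of P, a subspace of F_2^n
   (= row space of P^T). *)
Definition code (n l : nat) (P : 'M['F_2]_(n, l)) : {set 'rV['F_2]_n} :=
  [set c : 'rV['F_2]_n | (c <= P^T)%MS].

Definition hweight (n : nat) (c : 'rV['F_2]_n) : nat := #|[set i | c 0 i != 0]|.

Definition weight_enum (R : realType) (n l : nat) (P : 'M['F_2]_(n, l)) (zeta : Cx R)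
  : Cx R := \sum_(c in code P) zeta ^+ hweight c.

Definition alpha (R : realType) (n l : nat) (P : 'M['F_2]_(n, l)) (theta : R) : Cx R :=
  (2 ^+ \rank P)^-1 * expi (theta * n%:R) * weight_enum P (expi (- (2 * theta))).

Definition lexlt (l : nat) (a b : 'rV['F_2]_l) : bool :=
  [exists j : 'I_l, [forall i : 'I_l, (i < j)%N ==> (a 0 i == b 0 i)]
                      && (a 0 j == 0) && (b 0 j == 1)].

Definition projT (n l : nat) (P : 'M['F_2]_(n, l)) (x : 'rV['F_2]_l)
  : 'M['F_2]_(n, l) :=
  \matrix_(a < n, j < l)
     (if lexlt (row a P + x) (row a P) then (row a P + x) 0 j else row a P 0 j).

(* Main.v *)
Require Import Defs.
From HB Require Import structures.
From mathcomp Require Import all_boot all_order all_algebra.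
From mathcomp Require Import all_classical all_reals all_analysis.
From mathcomp Require Import complex.
From mathcomp Require Import ring.
Import Order.TTheory GRing.Theory Num.Theory.
Import numFieldNormedType.Exports.
Local Open Scope ring_scope.

Module Helpers.
Local Open Scope complex_scope.
Local Open Scope classical_set_scope.
Section An.
Variable R : realType.
Local Notation C := (Cx R).

Lemma termE (t : R) k : ('i * t%:C)^+k / (k`!)%:R = ((cos_coeff t k)%:C + 'i * (sin_coeff t k)%:C : C).
Proof.
rewrite /cos_coeff /sin_coeff /= -exprnP.
case: (boolP (odd k)) => ok.
  have -> : k = (k./2).*2.+1 by rewrite -{1}(odd_double_half k) ok add1n.
  move: (k./2) => m.
  have h1 : (m.*2.+1)./2 = m by rewrite /= uphalf_double.
  have h2 : (m.*2.+1).-1./2 = m by rewrite /= doubleK.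
  rewrite h1 h2 /= !mul0r !mul1r.
  rewrite rmorph0 add0r exprMn exprS -muln2 mulnC exprM sqr_i.
  rewrite !rmorphM rmorphXn rmorphXn rmorphN rmorph1 fmorphV rmorph_nat.
  by rewrite -!mulrA.
have -> : k = (k./2).*2 by rewrite -{1}(odd_double_half k) (negbTE ok) add0n.
move: (k./2) => m.
rewrite doubleK /= !mul0r !mul1r rmorph0 mulr0 addr0.
rewrite exprMn -muln2 mulnC exprM sqr_i.
by rewrite !rmorphM rmorphXn rmorphXn rmorphN rmorph1 fmorphV rmorph_nat.
Qed.
Lemma embed_cvg (u : R^nat) (a : R) : u @ \oo --> a -> (fun k => (u k)%:C : C) @ \oo --> (a%:C : C).
Proof.
move=> /cvgrPdist_lt H; apply/cvgrPdist_lt => e.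
rewrite ltcE /= => /andP[/eqP eI e0'].
near=> k.
have Hk : `|a - u k| < complex.Re e by near: k; exact: H.
rewrite -rmorphB normc_def /= expr0n /= addr0 sqrtr_sqr.
by rewrite ltcE /= eI eqxx Hk.
Unshelve. all: by end_near.
Qed.
Lemma cosc (x : R) : series (cos_coeff x) @ \oo --> cos x.
Proof. rewrite unlock. exact: is_cvg_series_cos_coeff. Qed.
Lemma sinc (x : R) : series (sin_coeff x) @ \oo --> sin x.
Proof. rewrite unlock. exact: is_cvg_series_sin_coeff. Qed.

Lemma expi_series (t : R) :
  series (fun k => ('i * t%:C)^+k / (k`!)%:R : C) @ \oo --> expi t.
Proof.
have -> : series (fun k => ('i * t%:C)^+k / (k`!)%:R : C) =
   (fun n => (series (cos_coeff t) n)%:C + 'i * (series (sin_coeff t) n)%:C).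
  apply/funext => n; rewrite /series /=.
  under eq_bigr do rewrite termE.
  by rewrite big_split /= -mulr_sumr !rmorph_sum.
have -> : expi t = (cos t)%:C + 'i * (sin t)%:C.
  by rewrite /expi; simpc.
apply: cvgD; first exact: embed_cvg (cosc t).
apply: cvgM; first exact: cvg_cst.
exact: embed_cvg (sinc t).
Qed.
End An.

Lemma F2_cases (a : 'F_2) : a = 0 \/ a = 1.
Proof.
case: a => m Hm.
have e2 : pdiv 2 = 2 by rewrite pdiv_id.
move: Hm; rewrite /= e2.
case: m => [|[|k]] Hm; [left|right|by []]; exact: val_inj.
Qed.
Lemma F2_11 : (1 + 1 : 'F_2) = 0.
Proof.
by case: (F2_cases (1 + 1)).
Qed.
Lemma F2_oppr (a : 'F_2) : - a = a.
Proof.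
case: (F2_cases a) => ->; first by rewrite oppr0.
by rewrite -[-1]add0r -{1}F2_11 addrK.
Qed.
Lemma F2_neq0 (a : 'F_2) : a != 0 -> a = 1.
Proof. by case: (F2_cases a) => ->. Qed.

Section Comb.
Variable R : realType.
Variable l : nat.
Local Notation C := (Cx R).
Local Notation V := ('rV['F_2]_l).

Definition sgnR (b : 'F_2) : R := if b == 0 then 1 else -1.
Lemma sgnR_add a b : sgnR (a + b) = sgnR a * sgnR b.
Proof.
by case: (F2_cases a) => ->; case: (F2_cases b) => ->; rewrite /sgnR /= ?mulr1 ?mul1r ?mulrNN ?mulr1.
Qed.
Definition dot (x y : V) : 'F_2 := (x *m y^T) 0 0.
Lemma dotDl x x' y : dot (x + x') y = dot x y + dot x' y.
Proof. by rewrite /dot mulmxDl mxE. Qed.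
Lemma dotDr x y y' : dot x (y + y') = dot x y + dot x y'.
Proof. by rewrite /dot linearD /= mulmxDr mxE. Qed.
Lemma dot0l y : dot 0 y = 0.
Proof. by rewrite /dot mul0mx mxE. Qed.
Lemma dot_e x j : dot x (ebasis j) = x 0 j.
Proof.
rewrite /dot mxE (bigD1 j) //= !mxE eqxx mulr1 big1 ?addr0 // => i /negbTE ij.
by rewrite !mxE ij mulr0.
Qed.

Definition T (w : V) : op R l := fun x y => (x == y + w)%:R.

Lemma sum_shift (x a : V) (f : V -> C) : \sum_z (x == z + a)%:R * f z = f (x - a).
Proof.
rewrite (bigD1 (x - a)) //= subrK eqxx mul1r big1 ?addr0 // => z zn.
have -> : (x == z + a) = false.
  by apply/negbTE; apply: contra zn => /eqP ->; rewrite addrK.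
by rewrite mul0r.
Qed.

Lemma opmulT u w : opmul (T u) (T w) = T (w + u).
Proof.
apply/funext => x; apply/funext => y; rewrite /opmul /T.
under eq_bigr do rewrite mulrC.
rewrite (bigD1 (y + w)) //= eqxx /= mul1r big1 ?addr0 //.
  by rewrite addrA.
by move=> z /negbTE ->; rewrite mul0r.
Qed.

Lemma opidT : @opid R l = T 0.
Proof. by apply/funext => x; apply/funext => y; rewrite /T addr0. Qed.

Lemma oppowT w (b : bool) : oppow (T w) b = T (if b then w else 0).
Proof. by case: b; rewrite /oppow /= opidT // opmulT add0r. Qed.

Lemma pauliStringE (v : V) : pauliString R v = T v.
Proof.
have H : forall s, foldr (fun b M => opmul (oppow (pauliX R b) (v 0 b != 0)) M) (@opid R l) s
   = T (\sum_(b <- s) (if v 0 b != 0 then ebasis b else 0)).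
  elim => [|b s IH] /=; first by rewrite big_nil opidT.
  by rewrite IH big_cons -/(T (ebasis b)) oppowT opmulT addrC.
rewrite /pauliString H; congr T.
rewrite big_enum /=; apply/rowP => j; rewrite summxE (bigD1 j) //= big1.
  rewrite addr0; case: (F2_cases (v 0 j)) => ->; rewrite ?eqxx ?mxE ?eqxx //.
move=> i ij; case: ifP => _; rewrite !mxE //. by rewrite eq_sym (negbTE ij).
Qed.
Lemma rowF2_opp (a : V) : - a = a.
Proof. by apply/rowP => j; rewrite mxE F2_oppr. Qed.

Definition chi (y x : V) : C := (sgnR (dot x y))%:C.
Lemma chiD y x x' : chi y (x + x') = chi y x * chi y x'.
Proof. by rewrite /chi dotDl sgnR_add rmorphM. Qed.
Lemma chiB y x x' : chi y (x - x') = chi y x * chi y x'.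
Proof. by rewrite rowF2_opp chiD. Qed.
Lemma chi0 y : chi y 0 = 1.
Proof. by rewrite /chi dot0l /sgnR eqxx. Qed.

Definition NV : C := (#|{: V}|)%:R.
Lemma NV_neq0 : NV != 0.
Proof. by rewrite /NV pnatr_eq0 -lt0n; apply/card_gt0P; exists 0. Qed.

Lemma sum_reindex (e : V) (F : V -> C) : \sum_y F y = \sum_y F (y + e).
Proof. exact: (reindex_inj (addIr e)). Qed.

Lemma neg_self (S : C) : S = - S -> S = 0.
Proof.
move=> H; have : S *+ 2 = 0 by rewrite mulr2n {1}H addNr.
by move/eqP; rewrite mulrn_eq0 /= => /eqP.
Qed.

Lemma exists_nz (x : V) : x != 0 -> exists j, x 0 j != 0.
Proof.
move=> Hx; apply/existsP; apply: contraR Hx => /existsPn H.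
by apply/eqP/rowP => j; rewrite mxE; apply/eqP; rewrite -[_ == _]negbK H.
Qed.

Lemma chi_sum x : \sum_y chi y x = if x == 0 then NV else 0.
Proof.
case: eqP => [->|/eqP Hx].
  by under eq_bigr do rewrite chi0; rewrite sumr_const /NV.
have [j Hj] := exists_nz x Hx.
apply: neg_self; rewrite {1}(sum_reindex (ebasis j)) -sumrN; apply: eq_bigr => y _.
rewrite /chi dotDr dot_e sgnR_add (F2_neq0 _ Hj) {2}/sgnR /= mulrN1 rmorphN; by [].
Qed.
End Comb.
Arguments chi {R l}.
Arguments sgnR {R}.
Arguments dot {l}.
Arguments exists_nz {l}.
Arguments sum_reindex {R l}.

Section Main.
Variable R : realType.
Variables n l : nat.
Variable P : 'M['F_2]_(n, l).
Variable theta : R.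
Local Notation C := (Cx R).
Local Notation V := ('rV['F_2]_l).

Lemma hamE x y : hamiltonian R P x y = \sum_a (x == y + row a P)%:R.
Proof. by rewrite /hamiltonian; apply: eq_bigr => a _; rewrite pauliStringE. Qed.

Definition mu (y : V) : C := 'i * theta%:C * \sum_a chi y (row a P).

Lemma oppowE k x : oppow (iThetaH P theta) k x 0 =
  (NV R l)^-1 * \sum_y chi y x * mu y ^+ k.
Proof.
elim: k x => [|k IH] x.
  rewrite /oppow /= /opid.
  under eq_bigr do rewrite expr0 mulr1.
  rewrite chi_sum; case: eqP => _; last by rewrite mulr0.
  by rewrite mulVf // NV_neq0.
rewrite /oppow iterS -/(oppow _ k) /opmul.
under eq_bigr do rewrite IH /iThetaH hamE.
set c := 'i * theta%:C.
pose G (y : V) (a : 'I_n) (z : V) := (x == z + row a P)%:R * (chi y z * mu y ^+ k).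
have L : forall z, c * (\sum_a (x == z + row a P)%:R) *
          ((NV R l)^-1 * \sum_y chi y z * mu y ^+ k) =
          c * (NV R l)^-1 * \sum_a \sum_y G y a z.
  move=> z; rewrite mulrACA; congr (_ * _); rewrite big_distrl /=.
  by apply: eq_bigr => a _; rewrite big_distrr.
under eq_bigr do rewrite L.
rewrite -mulr_sumr.
have Rhs : \sum_y chi y x * mu y ^+ k.+1 = c * \sum_y \sum_a \sum_z G y a z.
  rewrite mulr_sumr; apply: eq_bigr => y _.
  rewrite /G; under eq_bigr do rewrite sum_shift chiB.
  rewrite exprSr; set m := mu y ^+ k; rewrite /mu -/c.
  rewrite !mulr_sumr; apply: eq_bigr => a _; ring.
rewrite Rhs mulrCA -mulrA; congr (_ * (_ * _)).
under eq_bigr do rewrite exchange_big.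
rewrite exchange_big /=.
by apply: eq_bigr => y _; rewrite exchange_big.
Qed.

Definition rho (M : 'M['F_2]_(n, l)) (y : V) : R := \sum_a sgnR (dot (row a M) y).

Lemma muE y : mu y = 'i * (theta * rho P y)%:C.
Proof. by rewrite /mu /chi /rho rmorphM rmorph_sum mulrA. Qed.

Lemma cvg_finsum (I : finType) (f : I -> nat -> C) (a : I -> C) :
  (forall i, f i @ \oo --> a i) -> (fun k => \sum_i f i k) @ \oo --> \sum_i a i.
Proof.
move=> H; rewrite /index_enum; elim: (Finite.enum I) => [|i s IH].
  under eq_fun do rewrite big_nil. rewrite big_nil; exact: cvg_cst.
under eq_fun do rewrite big_cons. rewrite big_cons.
exact: cvgD (H i) IH.
Qed.

Lemma limitE x : opexp_entry_is (iThetaH P theta) x 0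
   ((NV R l)^-1 * \sum_y chi y x * expi (theta * rho P y)).
Proof.
rewrite /opexp_entry_is.
have -> : series (fun k => oppow (iThetaH P theta) k x 0 / (k`!)%:R) =
  (fun N => (NV R l)^-1 * \sum_y chi y x *
     series (fun k => ('i * (theta * rho P y)%:C)^+k / (k`!)%:R : C) N).
  apply/funext => N; rewrite /series /=.
  under eq_bigr do rewrite oppowE -mulrA big_distrl.
  rewrite -mulr_sumr exchange_big /=; congr (_ * _); apply: eq_bigr => y _.
  by rewrite mulr_sumr; apply: eq_bigr => k _; rewrite muE mulrA.
apply: cvgM; first exact: cvg_cst.
apply: cvg_finsum => y.
apply: cvgM; first exact: cvg_cst.
exact: expi_series.
Qed.

Lemma card_code (M : 'M['F_2]_(n, l)) : #|Defs.code M| = (2 ^ \rank M)%N.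
Proof.
set B := row_base M^T.
have -> : Defs.code M = [set u *m B | u : 'rV['F_2]_(\rank M^T)]%SET.
  apply/setP => c; rewrite inE.
  apply/idP/imsetP.
    rewrite -(eq_row_base M^T) => /submxP [D ->]; by exists D.
  by move=> [u _ ->]; rewrite -/B -(eq_row_base M^T) submxMl.
rewrite card_imset; last exact: row_free_inj (row_base_free _).
by rewrite card_mx card_Fp // mul1n mxrank_tr.
Qed.

Lemma fiber_sum (M : 'M['F_2]_(n, l)) (g : 'rV['F_2]_n -> C) :
  \sum_(y : V) g (y *m M^T) =
  (#|[set y : V | y *m M^T == 0]%SET|)%:R * \sum_(c in Defs.code M) g c.
Proof.
rewrite (partition_big (fun y : V => y *m M^T) (mem (Defs.code M))) /=; last first.
  by move=> y _; rewrite inE submxMl.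
rewrite mulr_sumr; apply: eq_bigr => c; rewrite inE => /submxP [D ->].
rewrite (eq_bigr (fun _ => g (D *m M^T))); last by move=> y /eqP ->.
rewrite sumr_const mulr_natl; congr (_ *+ _).
transitivity #|[set y : V | y *m M^T == D *m M^T]%SET|.
  by apply: eq_card => y; rewrite inE.
rewrite -[in RHS](card_imset _ (addIr D)).
apply: eq_card => y; rewrite inE.
apply/eqP/imsetP.
  move=> E; exists (y - D); first by rewrite inE mulmxBl E subrr.
  by rewrite subrK.
by move=> [z]; rewrite inE => /eqP Ez ->; rewrite mulmxDl Ez add0r.
Qed.

Lemma expiD (a b : R) : expi (a + b) = expi a * expi b.
Proof. rewrite /expi cosD sinD; simpc; congr (_ +i* _); ring. Qed.

Lemma expi0 : expi (0 : R) = 1.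
Proof. by rewrite /expi cos0 sin0. Qed.

Lemma expiX (a : R) w : expi a ^+ w = expi (a * w%:R).
Proof.
elim: w => [|w IH]; first by rewrite expr0 mulr0 expi0.
by rewrite exprS IH -expiD mulrS mulrDr mulr1.
Qed.

Lemma rho_weight (M : 'M['F_2]_(n, l)) y :
  rho M y = n%:R - 2 * (hweight (y *m M^T))%:R.
Proof.
rewrite /rho.
have E : forall a, dot (row a M) y = (y *m M^T) 0 a.
  by move=> a; rewrite /dot !mxE; apply: eq_bigr => k _; rewrite !mxE mulrC.
under eq_bigr do rewrite E.
have -> : (hweight (y *m M^T))%:R =
   \sum_a (((y *m M^T) 0 a != 0)%:R : R).
  rewrite /hweight -sumr_const big_mkcond /=; apply: eq_bigr => a _; rewrite (_ : (a \in _) = ((y *m M^T) 0 a != 0)); last by apply/idP/idP; rewrite in_setE.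
  by case: ifP.
rewrite mulr_sumr; have -> : (n%:R : R) = \sum_(a < n) 1 by rewrite sumr_const card_ord.
rewrite -sumrB; apply: eq_bigr => a _.
rewrite /sgnR; case: eqP => _ /=; ring.
Qed.

Lemma alphaE (M : 'M['F_2]_(n, l)) :
  Defs.alpha M theta = (NV R l)^-1 * \sum_y expi (theta * rho M y).
Proof.
set K := #|[set y : V | y *m M^T == 0]%SET|.
have HN : NV R l = K%:R * (2 ^ \rank M)%:R.
  have := fiber_sum M (fun _ => 1).
  by rewrite !sumr_const card_code /NV => H; exact: H.
under eq_bigr do rewrite rho_weight.
rewrite (fiber_sum M (fun c => expi (theta * (n%:R - 2 * (hweight c)%:R)))).
have E1 : (NV R l)^-1 * K%:R = 2 ^- \rank M.
  have K0 : (K%:R : C) != 0.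
    by apply: contraNneq (NV_neq0 R l); rewrite HN => ->; rewrite mul0r.
  by rewrite HN invfM mulrC mulrA mulfV // mul1r natrX.
rewrite /Defs.alpha /weight_enum -[LHS]mulrA [RHS]mulrA; congr (_ * _); first exact: esym E1.
rewrite mulr_sumr; apply: eq_bigr => c _.
rewrite expiX -expiD; congr expi; ring.
Qed.

Lemma lex_lead (x a : V) (j0 : 'I_l) : x 0 j0 != 0 ->
  (forall i : 'I_l, x 0 i != 0 -> (j0 <= i)%N) ->
  (if lexlt (a + x) a then a + x else a) 0 j0 = 0.
Proof.
move=> Hj0 Hmin.
have x1 : x 0 j0 = 1 by apply: F2_neq0.
have xlow : forall i : 'I_l, (i < j0)%N -> x 0 i = 0.
  move=> i lt; apply/eqP; apply: contraTT lt => /Hmin; by rewrite -leqNgt.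
case: ifP => H.
  move/existsP: H => [j /andP[/andP[/forallP Heq /eqP Hz] /eqP Ho]].
  have xj : x 0 j != 0.
    apply/eqP => x0; move: Hz; rewrite mxE x0 addr0 Ho => /eqP.
    by rewrite oner_eq0.
  have jj : j = j0.
    apply/val_inj/eqP; rewrite eqn_leq Hmin // andbT leqNgt; apply/negP => lt.
    have := Heq j0; rewrite lt /= mxE => /eqP.
    rewrite x1 => E; have : (1 : 'F_2) = 0 by rewrite -(addKr (a 0 j0) 1) addrC E subrr.
    by move/eqP; rewrite oner_eq0.
  by rewrite -jj.
case: (F2_cases (a 0 j0)) => // Ha; exfalso.
move/negbT: H => /negP; apply; apply/existsP; exists j0.
rewrite Ha mxE Ha x1 F2_11 !eqxx !andbT; apply/forallP => i; apply/implyP => lt.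
by rewrite mxE xlow // addr0.
Qed.

Lemma rowQ (x : V) a : row a (projT P x) =
  if lexlt (row a P + x) (row a P) then row a P + x else row a P.
Proof. by apply/rowP => j; rewrite !mxE; case: ifP => _; rewrite !mxE. Qed.

Lemma xpart (x : V) : x != 0 ->
  (NV R l)^-1 * \sum_y chi y x * expi (theta * rho P y) =
  Defs.alpha (projT P x) theta - Defs.alpha P theta.
Proof.
move=> Hx.
have [j Hj] := exists_nz x Hx.
case: (@arg_minnP _ j (fun i : 'I_l => x 0 i != 0) (fun i : 'I_l => val i) Hj) => j0 Hj0 Hmin.
set Q := projT P x.
have rhoQ_eq : forall y, dot x y = 0 -> rho Q y = rho P y.
  move=> y dxy; apply: eq_bigr => a _; rewrite /Q rowQ.
  by case: ifP => _ //; rewrite dotDl dxy addr0.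
have rhoQ_shift : forall y, rho Q (y + ebasis j0) = rho Q y.
  move=> y; rewrite /rho; apply: eq_bigr => a _.
  rewrite (dotDr _ (row a Q) y (ebasis j0)); by rewrite dot_e /Q rowQ (lex_lead _ _ _ Hj0 Hmin) addr0.
have chi_shift : forall y : V, chi (y + ebasis j0) x = - chi y x :> Cx R.
  move=> y; rewrite /chi (dotDr _ x y (ebasis j0)) dot_e sgnR_add (F2_neq0 _ Hj0) {2}/sgnR /= mulrN1.
  by rewrite rmorphN.
rewrite !alphaE -mulrBr; congr (_ * _).
set EP := fun y => expi (theta * rho P y).
set EQ := fun y => expi (theta * rho Q y).
have A : forall y, (1 + chi y x) * EP y = (1 + chi y x) * EQ y.
  move=> y; case: (F2_cases (dot x y)) => Hd.
    by rewrite /EP /EQ rhoQ_eq.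
  by rewrite /chi Hd /sgnR /= rmorphN rmorph1 subrr !mul0r.
have B : \sum_y chi y x * EQ y = 0.
  apply: neg_self; rewrite {1}(sum_reindex (ebasis j0)) -sumrN; apply: eq_bigr => y _.
  by rewrite chi_shift /EQ rhoQ_shift mulNr.
have : \sum_y (1 + chi y x) * EP y = \sum_y (1 + chi y x) * EQ y.
  by apply: eq_bigr => y _; exact: A.
under eq_bigr do rewrite mulrDl mul1r.
under [X in _ = X]eq_bigr do rewrite mulrDl mul1r.
rewrite !big_split /= B addr0 => H.
by rewrite -H addrAC subrr add0r.
Qed.
End Main.

End Helpers.
Import Helpers.

Theorem theorem1 (R : realType) (n l : nat) (P : 'M['F_2]_(n, l)) (theta : R) :
  opexp_entry_is (iThetaH P theta) 0 0 (alpha P theta) /\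
  (forall x : 'rV['F_2]_l, x != 0 ->
     opexp_entry_is (iThetaH P theta) x 0
       (alpha (projT P x) theta - alpha P theta)).
Proof.
split.
  rewrite (alphaE R n l theta P).
  suff -> : \sum_(y : 'rV['F_2]_l) expi (theta * rho R n l P y) = \sum_y chi y 0 * expi (theta * rho R n l P y).
    exact: limitE.
  by apply: eq_bigr => y _; rewrite chi0 mul1r.
move=> x Hx; rewrite -(xpart R n l P theta x Hx); exact: limitE.
Qed.
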